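(* Let $Q_4$ be the edge graph of the $4$-dimensional hypercube (vertices $\{0,1\}^4$, two vertices adjacent iff they differ in exactly one coordinate). Up to a permutation of the colours (simultaneous permutation of rows and columns of the colour adjacency matrix), the colour adjacency matrices of perfect $2$-colourings of $Q_4$ are exactly the five matrices \[ \begin{pmatrix} 0 & 4 \\ 4 & 0 \end{pmatrix}, \begin{pmatrix} 1 & 3 \\ 1 & 3 \end{pmatrix}, \begin{pmatrix} 1 & 3 \\ 3 & 1 \end{pmatrix}, \begin{pmatrix} 2 & 2 \\ 2 & 2 \end{pmatrix}, \begin{pmatrix} 3 & 1 \\ 1 & 3 \end{pmatrix}, \] and the colour adjacency matrices of perfect $3$-colourings of $Q_4$ are exactly the five matrices \[ \begin{pmatrix} 0 & 0 & 4 \\ 0 & 0 & 4 \\ 1 & 3 & 0 \end{pmatrix}, \begin{pmatrix} 0 & 0 & 4 \\ 0 & 0 & 4 \\ 2 & 2 & 0 \end{pmatrix}, \begin{pmatrix} 0 & 2 & 2 \\ 2 & 0 & 2 \\ 1 & 1 & 2 \end{pmatrix}, \begin{pmatrix} 1 & 1 & 2 \\ 1 & 1 & 2 \\ 1 & 1 & 2 \end{pmatrix}, \begin{pmatrix} 2 & 0 & 2 \\ 0 & 2 & 2 \\ 1 & 1 & 2 \end{pmatrix}. \] In particular each of these matrices is realized by some perfect colouring of $Q_4$.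
   Context: An $m$-colouring of a graph $G=(V,E)$ is a partition of $V$ into $m$ disjoint nonempty sets $V_1,\dots,V_m$ (the colours; adjacent vertices may have the same colour). It is perfect if for all $i,j$ every vertex of colour $i$ has the same number $a_{ij}$ of neighbours of colour $j$; the matrix $A=(a_{ij})$ is its colour adjacency matrix. Relabelling colours by a permutation $\sigma$ replaces $A$ by $(a_{\sigma(i)\sigma(j)})$. *)

(* Defs.v *)
From mathcomp Require Import all_boot all_order all_algebra all_fingroup.
Set Implicit Arguments. Unset Strict Implicit. Unset Printing Implicit Defensive.

Definition Q4 := {ffun 'I_4 -> bool}.

Definition q4adj (x y : Q4) : bool := #|[set i | x i != y i]| == 1%N.

Definition is_colouring (m : nat) (c : Q4 -> 'I_m) : Prop :=
  forall i : 'I_m, exists v : Q4, c v = i.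

Definition perfect_with (m : nat) (c : Q4 -> 'I_m) (A : 'M[nat]_m) : Prop :=
  forall (v : Q4) (j : 'I_m), #|[set w | q4adj v w & c w == j]| = A (c v) j.

Definition is_colour_adj_matrix (m : nat) (A : 'M[nat]_m) : Prop :=
  exists c : Q4 -> 'I_m, is_colouring c /\ perfect_with c A.

Definition relabel (m : nat) (s : 'S_m) (A : 'M[nat]_m) : 'M[nat]_m :=
  \matrix_(i, j) A (s i) (s j).

Definition mx_of_rows (m : nat) (rows : seq (seq nat)) : 'M[nat]_m :=
  \matrix_(i, j) nth 0%N (nth [::] rows i) j.

Definition list2 : seq 'M[nat]_2 :=
  [:: mx_of_rows 2 [:: [:: 0; 4]; [:: 4; 0]];
      mx_of_rows 2 [:: [:: 1; 3]; [:: 1; 3]];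
      mx_of_rows 2 [:: [:: 1; 3]; [:: 3; 1]];
      mx_of_rows 2 [:: [:: 2; 2]; [:: 2; 2]];
      mx_of_rows 2 [:: [:: 3; 1]; [:: 1; 3]]]%N.

Definition list3 : seq 'M[nat]_3 :=
  [:: mx_of_rows 3 [:: [:: 0; 0; 4]; [:: 0; 0; 4]; [:: 1; 3; 0]];
      mx_of_rows 3 [:: [:: 0; 0; 4]; [:: 0; 0; 4]; [:: 2; 2; 0]];
      mx_of_rows 3 [:: [:: 0; 2; 2]; [:: 2; 0; 2]; [:: 1; 1; 2]];
      mx_of_rows 3 [:: [:: 1; 1; 2]; [:: 1; 1; 2]; [:: 1; 1; 2]];
      mx_of_rows 3 [:: [:: 2; 0; 2]; [:: 0; 2; 2]; [:: 1; 1; 2]]]%N.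

(* Main.v *)
Require Import Defs.
From mathcomp Require Import all_boot all_order all_algebra all_fingroup.
Set Implicit Arguments. Unset Strict Implicit. Unset Printing Implicit Defensive.

Definition dec (n : nat) : Q4 := [ffun i : 'I_4 => odd (n %/ 2 ^ i)].
Definition ordl := [:: 0; 1; 2; 4; 8; 3; 5; 6; 9; 10; 12; 7; 11; 13; 14; 15].
Definition vs : seq Q4 := map dec ordl.
Definition NB := [:: [:: 1; 2; 3; 4]; [:: 0; 5; 6; 8]; [:: 0; 5; 7; 9]; [:: 0; 6; 7; 10]; [:: 0; 8; 9; 10]; [:: 1; 2; 11; 12]; [:: 1; 3; 11; 13]; [:: 2; 3; 11; 14]; [:: 1; 4; 12; 13]; [:: 2; 4; 12; 14]; [:: 3; 4; 13; 14]; [:: 5; 6; 7; 15]; [:: 5; 8; 9; 15]; [:: 6; 8; 10; 15]; [:: 7; 9; 10; 15]; [:: 11; 12; 13; 14]].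

Lemma decE n i : dec n i = odd (n %/ 2 ^ i).
Proof. exact: ffunE. Qed.

Definition bits n := [seq odd (n %/ 2 ^ k) | k <- iota 0 4].

Lemma bits_dec n : bits n = [seq dec n i | i <- enum 'I_4].
Proof.
rewrite /bits -val_enum_ord -map_comp; apply: eq_map => i /=; symmetry; apply: decE.
Qed.

Lemma q4adj_dec a b : q4adj (dec a) (dec b) =
  (count (fun k => odd (a %/ 2 ^ k) != odd (b %/ 2 ^ k)) (iota 0 4) == 1).
Proof.
rewrite /q4adj cardsE cardE /enum_mem size_filter -enumT -val_enum_ord count_map.
congr (_ == _); apply: eq_count => i /=; by congr (~~ (_ == _)); apply: decE.
Qed.

Lemma size_vs : size vs = 16. Proof. by []. Qed.

Lemma tab i j : i < 16 -> j < 16 ->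
  q4adj (nth (dec 0) vs i) (nth (dec 0) vs j) = (j \in nth [::] NB i).
Proof.
move=> hi hj; rewrite !(nth_map 0) // q4adj_dec.
have : all (fun i => all (fun j => (count (fun k => odd (nth 0 ordl i %/ 2 ^ k) != odd (nth 0 ordl j %/ 2 ^ k)) (iota 0 4) == 1) == (j \in nth [::] NB i)) (iota 0 16)) (iota 0 16) by vm_compute.
move/allP/(_ i); rewrite mem_iota hi => /(_ isT) /allP /(_ j); rewrite mem_iota hj => /(_ isT).
by move/eqP.
Qed.

Lemma uniq_vs : uniq vs.
Proof.
apply: (@map_uniq _ _ (fun x : Q4 => [seq x i | i <- enum 'I_4])).
have -> : map (fun x : Q4 => [seq x i | i <- enum 'I_4]) vs = map bits ordl.
  by rewrite /vs -map_comp; apply: eq_map => n /=; rewrite bits_dec.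
by vm_compute.
Qed.

Lemma mem_vs x : x \in vs.
Proof.
have cQ : #|Q4| = 16 by rewrite card_ffun card_bool card_ord.
have cv : #|vs| = 16 by rewrite (card_uniqP uniq_vs).
have := cardC (mem vs); rewrite cv cQ => /eqP; rewrite -{2}(addn0 16) eqn_add2l => /eqP/card0_eq/(_ x).
by rewrite !inE => /negbFE.
Qed.

Lemma card_vs (A : {pred Q4}) : #|A| = count (mem A) vs.
Proof.
rewrite cardE /enum_mem size_filter.
have P : perm_eq vs (Finite.enum Q4).
  apply: uniq_perm.
  - exact: uniq_vs.
  - by rewrite -enumT enum_uniq.
  - by move=> x; rewrite mem_vs -enumT mem_enum.
by rewrite (seq.permP P).
Qed.

Definition cnt (p : seq nat) i j := count (fun n => nth 0 p n == j) (nth [::] NB i).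
Definition NW := [:: [:: ]; [:: ]; [:: ]; [:: ]; [:: ]; [:: 0]; [:: ]; [:: ]; [:: ]; [:: 1]; [:: 2]; [:: 3; 4]; [:: ]; [:: 5]; [:: 6; 8]; [:: 7; 9; 10]; [:: 11; 12; 13; 14; 15]].
Definition CL := [:: [:: ]; [:: ]; [:: ]; [:: ]; [:: ]; [:: 0]; [:: 0]; [:: 0]; [:: 0]; [:: 0; 1]; [:: 0; 1; 2]; [:: 0; 1; 2; 3; 4]; [:: 0; 1; 2; 3; 4]; [:: 0; 1; 2; 3; 4; 5]; [:: 0; 1; 2; 3; 4; 5; 6; 8]; [:: 0; 1; 2; 3; 4; 5; 6; 7; 8; 9; 10]; [:: 0; 1; 2; 3; 4; 5; 6; 7; 8; 9; 10; 11; 12; 13; 14; 15]].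
Definition good m (p : seq nat) := let k := size p in
  all (fun i1 => all (fun i2 => (nth 0 p i1 == nth 0 p i2) ==>
     all (fun j => cnt p i1 j == cnt p i2 j) (iota 0 m)) (nth [::] CL k)) (nth [::] NW k).
Definition step m (L : seq (seq nat)) :=
  flatten [seq [seq rcons p c | c <- iota 0 m & good m (rcons p c)] | p <- L].
Definition lev m k := iter k (step m) [:: [::]].
Definition surj m (p : seq nat) := all (fun i => i \in p) (iota 0 m).
Definition Mp (p : seq nat) i j := cnt p (index i p) j.
Definition rowsOf m p (sg : seq nat) :=
  [seq [seq Mp p (nth 0 sg i) (nth 0 sg j) | j <- iota 0 m] | i <- iota 0 m].
Definition fin m (perms : seq (seq nat)) (rows : seq (seq (seq nat))) :=
  all (fun p => surj m p ==> has (fun sg => rowsOf m p sg \in rows) perms) (lev m 16).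

Lemma NB_filter i : i < 16 -> [seq n <- iota 0 16 | n \in nth [::] NB i] = nth [::] NB i.
Proof.
move=> hi.
have : all (fun i => [seq n <- iota 0 16 | n \in nth [::] NB i] == nth [::] NB i) (iota 0 16) by vm_compute.
by move/allP/(_ i); rewrite mem_iota hi => /(_ isT) /eqP.
Qed.

Lemma tables k i : k <= 16 -> i \in nth [::] NW k ++ nth [::] CL k ->
  (i < k) && all (fun n => n < k) (nth [::] NB i).
Proof.
move=> hk.
have : all (fun k => all (fun i => (i < k) && all (fun n => n < k) (nth [::] NB i)) (nth [::] NW k ++ nth [::] CL k)) (iota 0 17) by vm_compute.
by move/allP/(_ k); rewrite mem_iota ltnS hk => /(_ isT) /allP; apply.
Qed.

Section Bridge.
Variables (m : nat) (c : Q4 -> 'I_m).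
Let P := [seq val (c x) | x <- vs].

Lemma bridge i (j : 'I_m) : i < 16 ->
  #|[set w | q4adj (nth (dec 0) vs i) w & c w == j]| = cnt P i j.
Proof.
move=> hi; rewrite card_vs -{2}(mkseq_nth (dec 0) vs) /mkseq count_map size_vs.
rewrite /cnt -(NB_filter hi) count_filter; apply: eq_in_count => n.
rewrite mem_iota /= => hn; rewrite inE tab // andbC; congr (_ && _).
by rewrite (nth_map (dec 0)) ?size_vs.
Qed.
End Bridge.

Lemma cnt_take k (P : seq nat) i j : all (fun n => n < k) (nth [::] NB i) ->
  cnt (take k P) i j = cnt P i j.
Proof.
move=> /allP h; apply: eq_in_count => n /h hn /=; by rewrite nth_take.
Qed.

Lemma sound m (P : seq nat) : size P = 16 -> all (fun x => x < m) P ->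
  (forall i1 i2 j, i1 < 16 -> i2 < 16 -> j < m -> nth 0 P i1 = nth 0 P i2 -> cnt P i1 j = cnt P i2 j) ->
  forall k, k <= 16 -> take k P \in lev m k.
Proof.
move=> sz al H; elim=> [|k IH] hk; first by rewrite take0 inE.
rewrite (take_nth 0) ?sz // /lev iterS -/(lev m k).
apply/flatten_mapP; exists (take k P); first by apply: IH; apply: ltnW.
apply: map_f; rewrite mem_filter mem_iota /= add0n.
rewrite (allP al) ?mem_nth ?sz // andbT.
rewrite -(take_nth 0) ?sz // /good size_takel ?sz //.
apply/allP => i1 h1; apply/allP => i2 h2; apply/implyP => /eqP e; apply/allP => j.
rewrite mem_iota /= add0n => hj.
have /andP [l1 c1] : (i1 < k.+1) && all (fun n => n < k.+1) (nth [::] NB i1).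
  by apply: tables => //; rewrite mem_cat h1.
have /andP [l2 c2] : (i2 < k.+1) && all (fun n => n < k.+1) (nth [::] NB i2).
  by apply: tables => //; rewrite mem_cat h2 orbT.
rewrite !cnt_take //; apply/eqP; apply: H => //.
- exact: leq_trans l1 hk.
- exact: leq_trans l2 hk.
by move: e; rewrite !nth_take.
Qed.


Lemma mkperm m (sg : seq nat) : uniq sg -> size sg = m -> all (fun x => x < m) sg ->
  exists s : 'S_m, forall i : 'I_m, val (s i) = nth 0 sg i.
Proof.
move=> u sz al.
have lt : forall i : 'I_m, nth 0 sg i < m.
  by move=> i; apply: (allP al); apply: mem_nth; rewrite sz.
pose f := fun i : 'I_m => Ordinal (lt i).
have inj : injective f.
  move=> i1 i2 /(congr1 val) /= e; apply/val_inj; apply/eqP.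
  by rewrite -(nth_uniq 0 _ _ u) ?sz ?ltn_ord // e.
by exists (perm inj) => i; rewrite permE.
Qed.

Lemma complete m perms rows (A : 'M[nat]_m) : fin m perms rows ->
  all (fun sg => [&& uniq sg, size sg == m & all (fun x => x < m) sg]) perms ->
  is_colour_adj_matrix A -> exists s : 'S_m, relabel s A \in map (mx_of_rows m) rows.
Proof.
move=> hf hp [c [hc hpf]].
set P := [seq val (c x) | x <- vs].
have szP : size P = 16 by rewrite size_map.
have nthP : forall n, n < 16 -> nth 0 P n = val (c (nth (dec 0) vs n)).
  by move=> n hn; rewrite (nth_map (dec 0)) ?size_vs.
have cntA : forall i (j : 'I_m), i < 16 -> cnt P i j = A (c (nth (dec 0) vs i)) j.
  by move=> i j hi; rewrite -bridge // hpf.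
have memP : P \in lev m 16.
  suff : take 16 P \in lev m 16 by rewrite -szP take_size.
  apply: (sound szP) => //.
    apply/allP => x; rewrite /P => /mapP [y _ ->]; exact: ltn_ord.
  move=> i1 i2 j h1 h2 hj e.
  rewrite -[j]/(val (Ordinal hj)) !cntA //; congr (A _ _); apply/val_inj.
  by rewrite -!nthP.
have sP : surj m P.
  apply/allP => i; rewrite mem_iota /= add0n => hi.
  have [v hv] := hc (Ordinal hi).
  by rewrite -[i]/(val (Ordinal hi)) -hv; apply: (map_f (fun x => val (c x))); apply: mem_vs.
have /hasP [sg sgin rin] := implyP (allP hf P memP) sP.
have /and3P [u /eqP sz al] := allP hp sg sgin.
have [s hs] := mkperm u sz al.
exists s; apply/mapP; exists (rowsOf m P sg) => //.
apply/matrixP => i j; rewrite !mxE /rowsOf.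
rewrite (nth_map 0) ?size_iota // nth_iota // (nth_map 0) ?size_iota // nth_iota //.
rewrite /Mp ?add0n -!hs.
have inP : val (s i) \in P by apply: (allP sP); rewrite mem_iota /= add0n.
have hk : index (val (s i)) P < 16 by rewrite -szP index_mem.
rewrite cntA //; congr (A _ _); apply/val_inj.
by rewrite -nthP // nth_index.
Qed.

Definition wit_ok m (r : seq (seq nat)) (p : seq nat) :=
  [&& size p == 16, all (fun x => x < m) p, surj m p &
   all (fun i => all (fun j => cnt p i j == nth 0 (nth [::] r (nth 0 p i)) j) (iota 0 m)) (iota 0 16)].

Lemma realize m r p : wit_ok m r p -> is_colour_adj_matrix (mx_of_rows m r).
Proof.
case/and4P => /eqP sz al sj ok.
have ltc : forall x : Q4, nth 0 p (index x vs) < m.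
  by move=> x; apply: (allP al); apply: mem_nth; rewrite sz -size_vs index_mem mem_vs.
pose c := fun x => Ordinal (ltc x).
have vc : forall x, val (c x) = nth 0 p (index x vs) by [].
have eP : [seq val (c x) | x <- vs] = p.
  apply: (@eq_from_nth _ 0); first by rewrite size_map size_vs sz.
  move=> n; rewrite size_map size_vs => hn.
  by rewrite (nth_map (dec 0)) ?size_vs // vc index_uniq ?size_vs // uniq_vs.
exists c; split.
- move=> i; have : val i \in p by apply: (allP sj); rewrite mem_iota /= add0n.
  move=> ip; have hn : index (val i) p < 16 by rewrite -sz index_mem.
  exists (nth (dec 0) vs (index (val i) p)); apply/val_inj; rewrite vc.
  by rewrite index_uniq ?size_vs ?uniq_vs // nth_index.
- move=> v j.
  have hv : index v vs < 16 by rewrite -size_vs index_mem mem_vs.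
  rewrite -{1}(nth_index (dec 0) (mem_vs v)) bridge // eP mxE.
  apply/eqP; move: (allP ok _ (ltac:(by rewrite mem_iota /= add0n) : index v vs \in iota 0 16)).
  by move/allP/(_ (val j)); rewrite mem_iota /= add0n ltn_ord => /(_ isT).
Qed.

Lemma realize_all m rows ws : all2 (wit_ok m) rows ws ->
  forall r, r \in rows -> is_colour_adj_matrix (mx_of_rows m r).
Proof.
elim: rows ws => [|r0 rs IH] [|p ps] //= /andP [h1 h2] r.
rewrite inE => /orP [/eqP -> | hr]; first exact: realize h1.
exact: IH h2 r hr.
Qed.

Lemma relabel_real m (s : 'S_m) A : is_colour_adj_matrix (relabel s A) -> is_colour_adj_matrix A.
Proof.
case=> c [hc hp]; exists (fun x => s (c x)); split.
- move=> i; have [v hv] := hc ((s^-1)%g i); exists v; by rewrite hv permKV.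
- move=> v j.
  have -> : [set w | q4adj v w & s (c w) == j] = [set w | q4adj v w & c w == (s^-1)%g j].
    apply/setP => w; rewrite !inE; congr (_ && _).
    apply/eqP/eqP => [<-|->]; by rewrite ?permK ?permKV.
  by rewrite hp mxE permKV.
Qed.

Definition perms2 := [:: [:: 0; 1]; [:: 1; 0]].
Definition perms3 := [:: [:: 0; 1; 2]; [:: 0; 2; 1]; [:: 1; 0; 2]; [:: 1; 2; 0]; [:: 2; 0; 1]; [:: 2; 1; 0]].
Definition rows2 := [:: [:: [:: 0; 4]; [:: 4; 0]];
      [:: [:: 1; 3]; [:: 1; 3]];
      [:: [:: 1; 3]; [:: 3; 1]];
      [:: [:: 2; 2]; [:: 2; 2]];
      [:: [:: 3; 1]; [:: 1; 3]]].
Definition rows3 := [:: [:: [:: 0; 0; 4]; [:: 0; 0; 4]; [:: 1; 3; 0]];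
      [:: [:: 0; 0; 4]; [:: 0; 0; 4]; [:: 2; 2; 0]];
      [:: [:: 0; 2; 2]; [:: 2; 0; 2]; [:: 1; 1; 2]];
      [:: [:: 1; 1; 2]; [:: 1; 1; 2]; [:: 1; 1; 2]];
      [:: [:: 2; 0; 2]; [:: 0; 2; 2]; [:: 1; 1; 2]]].
Definition ws2 := [::[:: 0; 1; 1; 1; 1; 0; 0; 0; 0; 0; 0; 1; 1; 1; 1; 0]; [:: 0; 0; 1; 1; 1; 1; 1; 1; 1; 1; 1; 1; 1; 1; 0; 0]; [:: 0; 0; 1; 1; 1; 1; 1; 0; 1; 0; 0; 0; 0; 0; 1; 1]; [:: 0; 0; 0; 1; 1; 0; 1; 1; 1; 1; 0; 1; 1; 0; 0; 0]; [:: 0; 0; 0; 0; 1; 0; 0; 0; 1; 1; 1; 0; 1; 1; 1; 1]].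
Definition ws3 := [::[:: 0; 2; 2; 2; 2; 1; 1; 1; 1; 1; 1; 2; 2; 2; 2; 0]; [:: 0; 2; 2; 2; 2; 0; 1; 1; 1; 1; 0; 2; 2; 2; 2; 0]; [:: 0; 1; 1; 2; 2; 0; 2; 2; 2; 2; 1; 2; 2; 0; 0; 1]; [:: 0; 0; 1; 2; 2; 1; 2; 2; 2; 2; 1; 2; 2; 1; 0; 0]; [:: 0; 0; 0; 2; 2; 0; 2; 2; 2; 2; 1; 2; 2; 1; 1; 1]].

Lemma fin2 : fin 2 perms2 rows2. Proof. vm_compute. reflexivity. Qed.
Lemma fin3 : fin 3 perms3 rows3. Proof. vm_compute. reflexivity. Qed.
Lemma p2 : all (fun sg => [&& uniq sg, size sg == 2 & all (fun x => x < 2) sg]) perms2.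
Proof. by vm_compute. Qed.
Lemma p3 : all (fun sg => [&& uniq sg, size sg == 3 & all (fun x => x < 3) sg]) perms3.
Proof. by vm_compute. Qed.
Lemma w2 : all2 (wit_ok 2) rows2 ws2. Proof. by vm_compute. Qed.
Lemma w3 : all2 (wit_ok 3) rows3 ws3. Proof. by vm_compute. Qed.
Lemma l2 : list2 = map (mx_of_rows 2) rows2. Proof. by []. Qed.
Lemma l3 : list3 = map (mx_of_rows 3) rows3. Proof. by []. Qed.

Lemma both m perms rows ws (L : seq 'M[nat]_m) : L = map (mx_of_rows m) rows ->
  fin m perms rows ->
  all (fun sg => [&& uniq sg, size sg == m & all (fun x => x < m) sg]) perms ->
  all2 (wit_ok m) rows ws ->
  forall A : 'M[nat]_m, is_colour_adj_matrix A <-> exists s : 'S_m, relabel s A \in L.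
Proof.
move=> -> hf hp hw A; split; first exact: (complete hf hp).
case=> s /mapP [r hr e]; apply: (relabel_real (s := s)); rewrite e.
exact: realize_all hw r hr.
Qed.

Theorem theorem5p1 :
  (forall A : 'M[nat]_2,
     is_colour_adj_matrix A <-> exists s : 'S_2, relabel s A \in list2) /\
  (forall A : 'M[nat]_3,
     is_colour_adj_matrix A <-> exists s : 'S_3, relabel s A \in list3).
Proof.
split.
- exact: (both l2 fin2 p2 w2).
- exact: (both l3 fin3 p3 w3).
Qed.
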